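(* Let $\mathscr{P}_1$ and $\mathscr{P}_2$ be two positions of impartial combinatorial games played under the normal play convention, and consider their sum $\mathscr{P}_1+\mathscr{P}_2$ (independent components, a move consists of a move in exactly one component). Suppose a solution tree $S$ for $\mathscr{P}_1+\mathscr{P}_2$ has been computed, i.e. the outcome of every node of $S$ is known. Then, using only the nodes of $S$ and their outcomes, without computing the outcome of any other node, one can determine the nimber of one of the two components $\mathscr{P}_1$, $\mathscr{P}_2$, and whether the nimber of the other component is equal to it or different from it.
   Context: An impartial combinatorial game: two players move alternately with perfect information and no chance, and the same moves are available to both players from every position; under the normal play convention the player who cannot move loses. An option of a position $\mathscr{P}$ is a position reachable from $\mathscr{P}$ in one move. The outcome of a position is W (winning) if the player to move has a winning strategy and L (losing) otherwise: terminal positions are L, a position is W iff it has at least one option that is L, and L iff all its options are W. The sum $\mathscr{P}_1+\mathscr{P}_2$ is the position whose options are $\mathscr{P}_1'+\mathscr{P}_2$ for $\mathscr{P}_1'$ an option of $\mathscr{P}_1$ and $\mathscr{P}_1+\mathscr{P}_2'$ for $\mathscr{P}_2'$ an option of $\mathscr{P}_2$. A solution tree for a position $\mathscr{Q}$ is a subset $S$ of the nodes of the game tree of $\mathscr{Q}$ (the positions reachable from $\mathscr{Q}$, with edges from a position to its options), containing $\mathscr{Q}$, together with the outcomes of its nodes, such that every losing node of $S$ has all its options in $S$ and every winning node of $S$ has at least one losing option in $S$. The nimber of a position is defined recursively as the Mex (least non-negative integer not in the set) of the nimbers of its options; terminal positions have nimber $0$. By the Sprague–Grundy theory, $\mathscr{P}_1+\mathscr{P}_2$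 is losing iff the nimbers of $\mathscr{P}_1$ and $\mathscr{P}_2$ are equal. *)

(* Defs.v *)
From Stdlib Require Import List Arith.
Import ListNotations.
Set Implicit Arguments.

Section Games.
Variable G : Type.
Variable opts : G -> list G.

Definition is_option (x y : G) : Prop := In y (opts x).

Definition game_wf : Prop := well_founded (fun y x => is_option x y).

Inductive losing : G -> Prop :=
| LosingI x : (forall y, is_option x y -> winning y) -> losing x
with winning : G -> Prop :=
| WinningI x y : is_option x y -> losing y -> winning x.

Definition is_mex (l : list nat) (n : nat) : Prop :=
  ~ In n l /\ (forall k, k < n -> In k l).

Inductive nimber_of : G -> nat -> Prop :=
| NimberI x (f : G -> nat) n :
    (forall y, is_option x y -> nimber_of y (f y)) ->
    is_mex (map f (opts x)) n ->
    nimber_of x n.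

Inductive reachable (x : G) : G -> Prop :=
| reach_refl : reachable x x
| reach_step y z : reachable x y -> is_option y z -> reachable x z.
End Games.

Definition sum_opts {G1 G2 : Type} (opts1 : G1 -> list G1) (opts2 : G2 -> list G2)
  (p : G1 * G2) : list (G1 * G2) :=
  map (fun y => (y, snd p)) (opts1 (fst p)) ++ map (fun y => (fst p, y)) (opts2 (snd p)).

Definition solution_tree {G : Type} (opts : G -> list G) (q : G) (S : G -> Prop) : Prop :=
  S q /\
  (forall x, S x -> reachable opts q x) /\
  (forall x, S x -> losing opts x -> forall y, is_option opts x y -> S y) /\
  (forall x, S x -> winning opts x -> exists y, is_option opts x y /\ losing opts y /\ S y).

(* The information available from a solution tree S of the sum P1 + P2:
   the root, the nodes of S, the option edges between nodes of S, and the
   outcomes of the nodes of S (the set of losing nodes of S). *)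
Definition sol_data {G1 G2 : Type} : Type :=
  ((G1 * G2) * ((G1 * G2) -> Prop) * ((G1 * G2) -> (G1 * G2) -> Prop)
   * ((G1 * G2) -> Prop))%type.

Definition data_of {G1 G2 : Type} (opts1 : G1 -> list G1) (opts2 : G2 -> list G2)
  (P1 : G1) (P2 : G2) (S : G1 * G2 -> Prop) : @sol_data G1 G2 :=
  ((P1, P2), S,
   (fun p q => S p /\ S q /\ is_option (sum_opts opts1 opts2) p q),
   (fun p => S p /\ losing (sum_opts opts1 opts2) p)).

(* Main.v *)
Require Import Defs.
From Stdlib Require Import List Arith Lia Classical ClassicalEpsilon.
Import ListNotations.

Lemma mex_aux (l : list nat) (N : nat) :
  (forall k, k < N -> In k l) \/ (exists n, n < N /\ is_mex l n).
Proof.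
  induction N as [|N IH].
  - left; intros; lia.
  - destruct IH as [H|[n [Hn Hm]]].
    + destruct (in_dec Nat.eq_dec N l) as [Hi|Hi].
      * left; intros k Hk. destruct (Nat.eq_dec k N); [subst; auto|apply H; lia].
      * right; exists N; split; [lia|split; auto].
    + right; exists n; split; [lia|auto].
Qed.

Lemma mex_exists (l : list nat) : exists n, is_mex l n.
Proof.
  destruct (mex_aux l (S (S (list_max l)))) as [H|[n [_ Hn]]]; eauto.
  exfalso. assert (Hi : In (S (list_max l)) l) by (apply H; lia).
  assert (Hle := proj1 (list_max_le l (list_max l)) (le_n _)).
  rewrite Forall_forall in Hle. specialize (Hle _ Hi). lia.
Qed.

Lemma mex_unique l n m : is_mex l n -> is_mex l m -> n = m.
Proof.
  intros [H1 H2] [H3 H4].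
  destruct (lt_eq_lt_dec n m) as [[H|H]|H]; auto.
  - exfalso; apply H1, H4, H.
  - exfalso; apply H3, H2, H.
Qed.

Definition nf {G} (opts : G -> list G) (x : G) : nat :=
  epsilon (inhabits 0) (fun n => nimber_of opts x n).

Lemma nimber_exists {G} (opts : G -> list G) : game_wf opts ->
  forall x, exists n, nimber_of opts x n.
Proof.
  intros wf. apply (well_founded_ind wf). intros x IH.
  set (f := fun y => epsilon (inhabits 0) (fun n => nimber_of opts y n)).
  destruct (mex_exists (map f (opts x))) as [n Hn].
  exists n. apply NimberI with f; auto.
  intros y Hy. unfold f. apply epsilon_spec. apply IH. exact Hy.
Qed.

Lemma nimber_unique {G} (opts : G -> list G) x n m :
  nimber_of opts x n -> nimber_of opts x m -> n = m.
Proof.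
  intros H. revert m. induction H as [x f n Hf IHf Hmex].
  intros m Hm. inversion Hm as [x' g m' Hg Hmex']; subst.
  assert (E : map f (opts x) = map g (opts x)).
  { apply map_ext_in. intros a Ha. apply IHf; auto. }
  rewrite E in Hmex. eapply mex_unique; eauto.
Qed.

Lemma nf_spec {G} (opts : G -> list G) : game_wf opts -> forall x, nimber_of opts x (nf opts x).
Proof.
  intros wf x. unfold nf. apply epsilon_spec. apply nimber_exists; auto.
Qed.

Lemma nf_eq {G} (opts : G -> list G) : game_wf opts -> forall x n,
  nimber_of opts x n -> n = nf opts x.
Proof.
  intros wf x n H. eapply nimber_unique; eauto. apply nf_spec; auto.
Qed.

Lemma mex_nf {G} (opts : G -> list G) : game_wf opts -> forall x n,
  nimber_of opts x n -> is_mex (map (nf opts) (opts x)) n.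
Proof.
  intros wf x n H. destruct H as [x f n Hf Hm].
  assert (E : map f (opts x) = map (nf opts) (opts x)).
  { apply map_ext_in. intros a Ha. apply nf_eq; auto. }
  rewrite <- E; auto.
Qed.

Lemma no_self {G} (opts : G -> list G) : game_wf opts -> forall x, is_option opts x x -> False.
Proof.
  intros wf x. induction (wf x) as [x _ IH]. intros H. exact (IH x H H).
Qed.

Lemma sum_opt_iff {G1 G2} (o1 : G1 -> list G1) (o2 : G2 -> list G2) x y q :
  is_option (sum_opts o1 o2) (x, y) q <->
  (exists x', is_option o1 x x' /\ q = (x', y)) \/ (exists y', is_option o2 y y' /\ q = (x, y')).
Proof.
  unfold is_option, sum_opts; simpl. rewrite in_app_iff, !in_map_iff.
  split.
  - intros [[a [Ha Hb]]|[a [Ha Hb]]]; [left|right]; exists a; auto.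
  - intros [[a [Ha Hb]]|[a [Ha Hb]]]; [left|right]; exists a; auto.
Qed.

Lemma sum_wf {G1 G2} (o1 : G1 -> list G1) (o2 : G2 -> list G2) :
  game_wf o1 -> game_wf o2 -> game_wf (sum_opts o1 o2).
Proof.
  intros w1 w2 [x y]. revert y. induction (w1 x) as [x _ IHx].
  intros y. induction (w2 y) as [y _ IHy].
  constructor. intros q Hq. apply sum_opt_iff in Hq.
  destruct Hq as [[x' [H1 ->]]|[y' [H1 ->]]].
  - apply IHx; auto.
  - apply IHy; auto.
Qed.

Lemma excl {G} (opts : G -> list G) : game_wf opts ->
  forall p, losing opts p -> winning opts p -> False.
Proof.
  intros wf. apply (well_founded_ind wf (fun p => losing opts p -> winning opts p -> False)).
  intros p IH HL HW. inversion HW as [p' q Hq Lq]; subst.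
  inversion HL as [p' Hall]; subst.
  exact (IH q Hq Lq (Hall q Hq)).
Qed.

Lemma SG {G1 G2} (o1 : G1 -> list G1) (o2 : G2 -> list G2) :
  game_wf o1 -> game_wf o2 -> forall p,
  (nf o1 (fst p) = nf o2 (snd p) -> losing (sum_opts o1 o2) p) /\
  (nf o1 (fst p) <> nf o2 (snd p) -> winning (sum_opts o1 o2) p).
Proof.
  intros w1 w2.
  apply (well_founded_ind (sum_wf o1 o2 w1 w2)).
  intros [x y] IH; simpl.
  assert (M1 := mex_nf o1 w1 x _ (nf_spec o1 w1 x)).
  assert (M2 := mex_nf o2 w2 y _ (nf_spec o2 w2 y)).
  split.
  - intros Heq. constructor. intros q Hq.
    assert (IHq := IH q Hq). apply sum_opt_iff in Hq.
    destruct Hq as [[x' [H1 ->]]|[y' [H1 ->]]]; simpl in IHq; apply (proj2 IHq).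
    + intros E. apply (proj1 M1). rewrite Heq, <- E. apply in_map. exact H1.
    + intros E. apply (proj1 M2). rewrite <- Heq, E. apply in_map. exact H1.
  - intros Hne. destruct (lt_eq_lt_dec (nf o1 x) (nf o2 y)) as [[H|H]|H]; [|contradiction|].
    + apply (proj2 M2) in H. apply in_map_iff in H. destruct H as [y' [E Hy']].
      assert (Ho : is_option (sum_opts o1 o2) (x, y) (x, y')).
      { apply sum_opt_iff. right; eauto. }
      apply WinningI with (x, y'); auto. apply (IH _ Ho). simpl; auto.
    + apply (proj2 M1) in H. apply in_map_iff in H. destruct H as [x' [E Hx']].
      assert (Ho : is_option (sum_opts o1 o2) (x, y) (x', y)).
      { apply sum_opt_iff. left; eauto. }
      apply WinningI with (x', y); auto. apply (IH _ Ho). simpl; auto.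
Qed.

Lemma SG_lose {G1 G2} (o1 : G1 -> list G1) (o2 : G2 -> list G2) :
  game_wf o1 -> game_wf o2 -> forall p,
  losing (sum_opts o1 o2) p -> nf o1 (fst p) = nf o2 (snd p).
Proof.
  intros w1 w2 p HL. destruct (Nat.eq_dec (nf o1 (fst p)) (nf o2 (snd p))) as [E|E]; auto.
  exfalso. apply (excl _ (sum_wf o1 o2 w1 w2) p HL). apply (SG o1 o2 w1 w2 p); auto.
Qed.

Definition comp1 {G1 G2} (E : G1*G2 -> G1*G2 -> Prop) p q := E p q /\ snd q = snd p.

Inductive Det {G1 G2} (E : G1*G2 -> G1*G2 -> Prop) (Ld : G1*G2 -> Prop) :
  G1*G2 -> bool*nat*bool -> Prop :=
| Dw1 p q i m b : comp1 E p q -> Ld q -> Det E Ld q (i,m,b) -> Det E Ld p (false,m,false)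
| Dw2 p q i m b : E p q -> fst q = fst p -> Ld q -> Det E Ld q (i,m,b) -> Det E Ld p (true,m,false)
| Dl1 p q m b : Ld p -> comp1 E p q -> Det E Ld q (false,m,b) -> Det E Ld p (false,m,true)
| Dl3 p n (g : G1*G2 -> nat) (bb : G1*G2 -> bool) (w : nat -> G1*G2) :
    Ld p -> (forall q, comp1 E p q -> Det E Ld q (true, g q, bb q)) ->
    (forall q, comp1 E p q -> g q <> n) ->
    (forall k, k < n -> comp1 E p (w k) /\ g (w k) = k) -> Det E Ld p (true,n,true).

Definition Edata {G1 G2} (o1 : G1 -> list G1) (o2 : G2 -> list G2) (S : G1*G2 -> Prop) :=
  fun p q => S p /\ S q /\ is_option (sum_opts o1 o2) p q.
Definition Ldata {G1 G2} (o1 : G1 -> list G1) (o2 : G2 -> list G2) (S : G1*G2 -> Prop) :=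
  fun p => S p /\ losing (sum_opts o1 o2) p.

Definition Res {G1 G2} (o1 : G1 -> list G1) (o2 : G2 -> list G2) (x : G1) (y : G2)
  (r : bool*nat*bool) : Prop :=
  match r with (i, n, b) =>
    (if i then nimber_of o1 x n else nimber_of o2 y n) /\
    (b = true <-> exists m, nimber_of o1 x m /\ nimber_of o2 y m) end.

Lemma comp1_opt {G1 G2} (o1 : G1 -> list G1) (o2 : G2 -> list G2) S :
  game_wf o2 -> forall x y q, comp1 (Edata o1 o2 S) (x, y) q ->
  exists x', is_option o1 x x' /\ q = (x', y).
Proof.
  intros w2 x y q [[_ [_ Ho]] Hs]. apply sum_opt_iff in Ho.
  destruct Ho as [H|[y' [H ->]]]; auto. simpl in Hs; subst.
  exfalso; exact (no_self o2 w2 _ H).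
Qed.

Lemma comp2_opt {G1 G2} (o1 : G1 -> list G1) (o2 : G2 -> list G2) S :
  game_wf o1 -> forall x y q, Edata o1 o2 S (x, y) q -> fst q = fst (x, y) ->
  exists y', is_option o2 y y' /\ q = (x, y').
Proof.
  intros w1 x y q [_ [_ Ho]] Hs. apply sum_opt_iff in Ho.
  destruct Ho as [[x' [H ->]]|H]; auto. simpl in Hs; subst.
  exfalso; exact (no_self o1 w1 _ H).
Qed.

Lemma soundness {G1 G2} (o1 : G1 -> list G1) (o2 : G2 -> list G2) S :
  game_wf o1 -> game_wf o2 ->
  (forall x, S x -> losing (sum_opts o1 o2) x -> forall y, is_option (sum_opts o1 o2) x y -> S y) ->
  forall p r, Det (Edata o1 o2 S) (Ldata o1 o2 S) p r -> Res o1 o2 (fst p) (snd p) r.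
Proof.
  intros w1 w2 HSl p r H.
  induction H as [p q i m b Hc [Sq Lq] HD IH | p q i m b Hc Hf [Sq Lq] HD IH
                  | p q m b [Sp Lp] Hc HD IH | p n g bb w [Sp Lp] HD IH Hne Hw].
  - destruct p as [x y].
    destruct (comp1_opt o1 o2 S w2 x y q Hc) as [x' [Hx' ->]].
    assert (E := SG_lose o1 o2 w1 w2 _ Lq). simpl in E, IH |- *.
    assert (Hm : m = nf o2 y).
    { destruct i; destruct IH as [IH _].
      - rewrite <- E. apply nf_eq; auto.
      - apply nf_eq; auto. }
    split.
    + rewrite Hm. apply nf_spec; auto.
    + split; [discriminate|]. intros [m' [H1 H2]]. exfalso.
      apply (excl _ (sum_wf o1 o2 w1 w2) (x, y)).
      * apply (SG o1 o2 w1 w2 (x,y)). simpl. rewrite <- (nf_eq o1 w1 _ _ H1), <- (nf_eq o2 w2 _ _ H2). auto.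
      * apply WinningI with (x', y); auto. apply Hc.
  - destruct p as [x y].
    destruct (comp2_opt o1 o2 S w1 x y q Hc Hf) as [y' [Hy' ->]].
    assert (E := SG_lose o1 o2 w1 w2 _ Lq). simpl in E, IH |- *.
    assert (Hm : m = nf o1 x).
    { destruct i; destruct IH as [IH _].
      - apply nf_eq; auto.
      - rewrite E. apply nf_eq; auto. }
    split.
    + rewrite Hm. apply nf_spec; auto.
    + split; [discriminate|]. intros [m' [H1 H2]]. exfalso.
      apply (excl _ (sum_wf o1 o2 w1 w2) (x, y)).
      * apply (SG o1 o2 w1 w2 (x,y)). simpl. rewrite <- (nf_eq o1 w1 _ _ H1), <- (nf_eq o2 w2 _ _ H2). auto.
      * apply WinningI with (x, y'); auto. apply Hc.
  - destruct p as [x y].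
    destruct (comp1_opt o1 o2 S w2 x y q Hc) as [x' [Hx' ->]].
    assert (E := SG_lose o1 o2 w1 w2 _ Lp). simpl in E, IH |- *.
    destruct IH as [IH _]. split; auto.
    split; auto. intros _. exists m; split; auto.
    rewrite (nf_eq o2 w2 _ _ IH), <- E. apply nf_spec; auto.
  - destruct p as [x y].
    assert (E := SG_lose o1 o2 w1 w2 _ Lp). simpl in E |- *.
    assert (Hx : nimber_of o1 x n).
    { apply NimberI with (nf o1).
      - intros z _. apply nf_spec; auto.
      - split.
        + intros Hi. apply in_map_iff in Hi. destruct Hi as [x' [Ex Hx']].
          assert (Hc : comp1 (Edata o1 o2 S) (x, y) (x', y)).
          { split; auto. split; [auto|split].
            - apply (HSl (x,y)); auto. apply sum_opt_iff; left; eauto.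
            - apply sum_opt_iff; left; eauto. }
          destruct (IH _ Hc) as [IH1 _]. simpl in IH1.
          apply (Hne _ Hc). rewrite <- Ex. apply nf_eq; auto.
        + intros k Hk. destruct (Hw k Hk) as [Hc Eg].
          destruct (IH _ Hc) as [IH1 _].
          destruct (comp1_opt o1 o2 S w2 x y _ Hc) as [x' [Hx' Ew]].
          rewrite Eg in IH1. rewrite Ew in IH1. simpl in IH1.
          rewrite (nf_eq o1 w1 _ _ IH1). apply in_map; auto. }
    split; auto. split; auto. intros _. exists n; split; auto.
    rewrite (nf_eq o1 w1 _ _ Hx), E. apply nf_spec; auto.
Qed.

Lemma existence {G1 G2} (o1 : G1 -> list G1) (o2 : G2 -> list G2) S :
  game_wf o1 -> game_wf o2 ->
  (forall x, S x -> losing (sum_opts o1 o2) x -> forall y, is_option (sum_opts o1 o2) x y -> S y) ->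
  (forall x, S x -> winning (sum_opts o1 o2) x ->
     exists y, is_option (sum_opts o1 o2) x y /\ losing (sum_opts o1 o2) y /\ S y) ->
  forall p, S p -> exists r, Det (Edata o1 o2 S) (Ldata o1 o2 S) p r.
Proof.
  intros w1 w2 HSl HSw.
  apply (well_founded_ind (sum_wf o1 o2 w1 w2)
    (fun p => S p -> exists r, Det (Edata o1 o2 S) (Ldata o1 o2 S) p r)).
  intros [x y] IH Sp.
  assert (HSG := SG o1 o2 w1 w2 (x, y)). simpl in HSG.
  destruct (Nat.eq_dec (nf o1 x) (nf o2 y)) as [Heq|Hne].
  - assert (Lp : losing (sum_opts o1 o2) (x, y)) by (apply HSG; auto).
    destruct (classic (exists q m b, comp1 (Edata o1 o2 S) (x, y) q /\
                 Det (Edata o1 o2 S) (Ldata o1 o2 S) q (false, m, b))) as [Hc|Hc].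
    + destruct Hc as [q [m [b [Hc HD]]]]. exists (false, m, true).
      apply Dl1 with q b; [split; auto | exact Hc | exact HD].
    + exists (true, nf o1 x, true).
      apply Dl3 with (g := fun q => nf o1 (fst q))
        (bb := fun q => epsilon (inhabits true)
                (fun b => Det (Edata o1 o2 S) (Ldata o1 o2 S) q (true, nf o1 (fst q), b)))
        (w := fun k => epsilon (inhabits (x, y))
                (fun q => comp1 (Edata o1 o2 S) (x, y) q /\ nf o1 (fst q) = k)).
      * split; auto.
      * intros q Hq. apply epsilon_spec.
        destruct (comp1_opt o1 o2 S w2 x y q Hq) as [x' [Hx' ->]].
        assert (Ho : is_option (sum_opts o1 o2) (x, y) (x', y)) by (apply Hq).
        destruct (IH _ Ho (HSl _ Sp Lp _ Ho)) as [[[i m] b] HD].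
        destruct i.
        -- exists b. simpl.
           assert (R := soundness o1 o2 S w1 w2 HSl _ _ HD). simpl in R.
           destruct R as [R _]. rewrite <- (nf_eq o1 w1 _ _ R). exact HD.
        -- exfalso. apply Hc. exists (x', y), m, b. auto.
      * intros q Hq. destruct (comp1_opt o1 o2 S w2 x y q Hq) as [x' [Hx' ->]].
        simpl. intros E.
        apply (proj1 (mex_nf o1 w1 x _ (nf_spec o1 w1 x))). rewrite <- E.
        apply in_map; auto.
      * intros k Hk. apply (epsilon_spec (inhabits (x,y))
          (fun q => comp1 (Edata o1 o2 S) (x, y) q /\ nf o1 (fst q) = k)).
        apply (proj2 (mex_nf o1 w1 x _ (nf_spec o1 w1 x))) in Hk.
        apply in_map_iff in Hk. destruct Hk as [x' [Ex Hx']].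
        assert (Ho : is_option (sum_opts o1 o2) (x, y) (x', y)) by (apply sum_opt_iff; left; eauto).
        exists (x', y). split; auto. split; auto. split; auto.
        split; auto. apply (HSl _ Sp Lp _ Ho).
  - assert (Wp : winning (sum_opts o1 o2) (x, y)) by (apply HSG; auto).
    destruct (HSw _ Sp Wp) as [q [Ho [Lq Sq]]].
    destruct (IH _ Ho Sq) as [[[i m] b] HD].
    assert (Ho' := Ho). apply sum_opt_iff in Ho'.
    destruct Ho' as [[x' [Hx' ->]]|[y' [Hy' ->]]].
    + exists (false, m, false). apply Dw1 with (x', y) i b; auto.
      split; auto. split; auto.
      split; auto.
    + exists (true, m, false). apply Dw2 with (x, y') i b; auto.
      split; auto. split; auto.
Qed.

Definition Good {G1 G2} (d : @sol_data G1 G2) (r : bool*nat*bool) : Prop :=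
  forall (o1 : G1 -> list G1) (o2 : G2 -> list G2), game_wf o1 -> game_wf o2 ->
  forall P1 P2 S, solution_tree (sum_opts o1 o2) (P1, P2) S ->
  data_of o1 o2 P1 P2 S = d -> Res o1 o2 P1 P2 r.

Theorem mainTheorem1 (G1 G2 : Type) :
  exists F : @sol_data G1 G2 -> bool * nat * bool,
  forall (opts1 : G1 -> list G1) (opts2 : G2 -> list G2),
    game_wf opts1 -> game_wf opts2 ->
  forall (P1 : G1) (P2 : G2) (S : G1 * G2 -> Prop),
    solution_tree (sum_opts opts1 opts2) (P1, P2) S ->
    let '(i, n, b) := F (data_of opts1 opts2 P1 P2 S) in
    (if i then nimber_of opts1 P1 n else nimber_of opts2 P2 n) /\
    (b = true <-> exists m, nimber_of opts1 P1 m /\ nimber_of opts2 P2 m).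
Proof.
  exists (fun d => epsilon (inhabits (true, 0, true)) (Good d)).
  intros o1 o2 w1 w2 P1 P2 S HS. cbv beta.
  assert (HG : Good (data_of o1 o2 P1 P2 S)
     (epsilon (inhabits (true, 0, true)) (Good (data_of o1 o2 P1 P2 S)))).
  { apply epsilon_spec.
    destruct HS as [S0 [_ [HSl HSw]]].
    destruct (existence o1 o2 S w1 w2 HSl HSw _ S0) as [r HD].
    exists r. intros o1' o2' w1' w2' P1' P2' S' HS' Heq.
    assert (HE : Edata o1' o2' S' = Edata o1 o2 S) by exact (f_equal (fun d => snd (fst d)) Heq).
    assert (HL : Ldata o1' o2' S' = Ldata o1 o2 S) by exact (f_equal (fun d => snd d) Heq).
    assert (HR : (P1', P2') = (P1, P2)) by exact (f_equal (fun d => fst (fst (fst d))) Heq).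
    rewrite <- HE, <- HL in HD. rewrite <- HR in HD.
    destruct HS' as [_ [_ [HSl' _]]].
    exact (soundness o1' o2' S' w1' w2' HSl' _ _ HD). }
  revert HG. generalize (epsilon (inhabits (true, 0, true)) (Good (data_of o1 o2 P1 P2 S))).
  intros [[i n] b] HG. exact (HG o1 o2 w1 w2 P1 P2 S HS eq_refl).
Qed.
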